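(* Let $e_b>0$ and define $\xi$ by $$\xi e_b=\tfrac12-\tfrac{1}{2\sqrt2}(1-3e_b)+\sqrt{\tfrac{1-(1-3e_b)^2}{24}} .$$ Assume $\xi\ge1$, $e_b<\frac{1}{2(1+\xi)}$ and $e_b<\frac{1}{2\xi}$. For $a\in[0,e_b]$ consider the initial triple $(p_X,p_Y,p_Z)=(e_b-a,\;a,\;\xi e_b-a)$. Fix any finite sequence of B steps and P steps whose first step is a B step, let $(p_X',p_Y',p_Z')$ be the result of applying it, and let $R(a)=1-H_2(p_X'+p_Y')-H_2(p_Z'+p_Y')$. Then the minimum of $R(a)$ over $a\in[0,e_b]$ (the worst case) is attained at $a=0$.
   Context: $H_2(p)=-p\log_2 p-(1-p)\log_2(1-p)$. A B step maps $(p_X,p_Y,p_Z)$ to $p_X'=(p_X^2+p_Y^2)/p_S$, $p_Y'=2p_Xp_Y/p_S$, $p_Z'=2(1-p_X-p_Y-p_Z)p_Z/p_S$ with $p_S=1-2(p_X+p_Y)(1-p_X-p_Y)$. A P step maps $(p_X,p_Y,p_Z)$, with $p_I=1-p_X-p_Y-p_Z$, to $p_X'=3p_I^2(p_X+p_Y)+6p_Ip_Xp_Z+3p_X^2p_Y+p_X^3$, $p_Y'=6p_Ip_Yp_Z+3p_X(p_Y^2+p_Z^2)+3p_Yp_Z^2+p_Y^3$, $p_Z'=3p_I(p_Y^2+p_Z^2)+6p_Xp_Yp_Z+3p_Y^2p_Z+p_Z^3$. This is the (worst-case) two-photon SARG04 initial state, with $e_b$ the bit error rate and $a$ the $Y$-error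 rate. *)

(* Defs.v *)
From Stdlib Require Import Reals List.
Open Scope R_scope.

(* base-2 logarithm; Stdlib's ln is total with ln x = 0 for x <= 0,
   so p * log2 p = 0 at p = 0 (the usual 0 log 0 = 0 convention). *)
Definition log2 (x : R) : R := ln x / ln 2.

Definition H2 (p : R) : R := - p * log2 p - (1 - p) * log2 (1 - p).

(* error-rate triples (p_X, p_Y, p_Z) *)
Definition triple := (R * R * R)%type.

Definition B_step (t : triple) : triple :=
  let '(pX, pY, pZ) := t in
  let pS := 1 - 2 * (pX + pY) * (1 - pX - pY) in
  ((pX ^ 2 + pY ^ 2) / pS,
   2 * pX * pY / pS,
   2 * (1 - pX - pY - pZ) * pZ / pS).

Definition P_step (t : triple) : triple :=
  let '(pX, pY, pZ) := t in
  let pI := 1 - pX - pY - pZ in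
  (3 * pI ^ 2 * (pX + pY) + 6 * pI * pX * pZ + 3 * pX ^ 2 * pY + pX ^ 3,
   6 * pI * pY * pZ + 3 * pX * (pY ^ 2 + pZ ^ 2) + 3 * pY * pZ ^ 2 + pY ^ 3,
   3 * pI * (pY ^ 2 + pZ ^ 2) + 6 * pX * pY * pZ + 3 * pY ^ 2 * pZ + pZ ^ 3).

Inductive step := Bs | Ps.

Definition apply_step (s : step) (t : triple) : triple :=
  match s with Bs => B_step t | Ps => P_step t end.

(* apply the steps in list order: the head of the list is applied first *)
Definition apply_steps (ss : list step) (t : triple) : triple :=
  fold_left (fun acc s => apply_step s acc) ss t.

Definition xi_of (eb : R) : R :=
  (1/2 - 1 / (2 * sqrt 2) * (1 - 3 * eb)
   + sqrt ((1 - (1 - 3 * eb) ^ 2) / 24)) / eb.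

(* initial (worst-case two-photon SARG04) triple *)
Definition init_triple (eb xi a : R) : triple := (eb - a, a, xi * eb - a).

Definition rate (ss : list step) (eb xi a : R) : R :=
  let '(pX, pY, pZ) := apply_steps ss (init_triple eb xi a) in
  1 - H2 (pX + pY) - H2 (pZ + pY).

(* Main.v *)
Require Import Defs.
From Stdlib Require Import Reals List Lra Psatz.
Open Scope R_scope.

Lemma ln_le_xm1 (x : R) : 0 < x -> ln x <= x - 1.
Proof. intro H. pose proof (exp_ineq1_le (ln x)). rewrite exp_ln in H0; lra. Qed.

Lemma ln_le_mono (x y : R) : 0 < x -> x <= y -> ln x <= ln y.
Proof.
  intros Hx Hxy. destruct (Req_dec x y) as [->|Hne]; [lra|].
  left. apply ln_increasing; lra.
Qed.

Lemma key1 (p1 p2 : R) : 0 <= p1 -> 0 < p2 -> - p1 * ln p1 <= - p1 * ln p2 + p2 - p1.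
Proof.
  intros H1 H2. destruct (Req_dec p1 0) as [->|Hne]; [lra|].
  assert (Hp : 0 < p1) by lra.
  pose proof (ln_le_xm1 (p2 * / p1)) as L.
  assert (0 < p2 * / p1) by (apply Rmult_lt_0_compat; [lra| apply Rinv_0_lt_compat; lra]).
  specialize (L H).
  rewrite ln_mult in L by (try apply Rinv_0_lt_compat; lra).
  rewrite ln_Rinv in L by lra.
  apply Rmult_le_compat_l with (r := p1) in L; [|lra].
  replace (p1 * (p2 * / p1 - 1)) with (p2 - p1) in L by (field; lra).
  lra.
Qed.

Lemma H2_mono (p1 p2 : R) : 0 <= p1 -> p1 <= p2 -> p2 <= 1/2 -> H2 p1 <= H2 p2.
Proof.
  intros H1 H12 H2h.
  assert (L2 : 0 < ln 2) by (pose proof ln_lt_2; lra).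
  assert (E : forall p, H2 p = (- p * ln p - (1 - p) * ln (1 - p)) / ln 2).
  { intro p. unfold H2, log2. field. lra. }
  rewrite !E. unfold Rdiv. apply Rmult_le_compat_r; [left; apply Rinv_0_lt_compat; lra|].
  destruct (Req_dec p2 0) as [E2|E2].
  { assert (p1 = p2) by lra. subst. lra. }
  assert (P2 : 0 < p2) by lra.
  pose proof (key1 p1 p2 H1 P2) as K1.
  pose proof (key1 (1 - p1) (1 - p2) ltac:(lra) ltac:(lra)) as K2.
  pose proof (ln_le_mono p2 (1 - p2) P2 ltac:(lra)) as LL.
  assert (0 <= (p2 - p1) * (ln (1 - p2) - ln p2)) by (apply Rmult_le_pos; lra).
  nra.
Qed.

Definition FA (t : triple) : R := let '(x, y, z) := t in 1 - 2 * (x + y).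
Definition FB (t : triple) : R := let '(x, y, z) := t in 1 - 2 * (y + z).
Definition FC (t : triple) : R := let '(x, y, z) := t in 1 - 2 * (x + z).

Lemma B_step_F (t : triple) :
  FA (B_step t) = 2 * FA t / (1 + FA t ^ 2) /\
  FB (B_step t) = (FB t ^ 2 + FC t ^ 2) / (1 + FA t ^ 2) /\
  FC (B_step t) = 2 * FB t * FC t / (1 + FA t ^ 2).
Proof.
  destruct t as [[x y] z]. simpl.
  pose proof (pow2_ge_0 (1 - 2 * (x + y))).
  assert (0 < 1 - 2 * (x + y) * (1 - x - y)) by nra.
  assert (0 < 1 + (1 - 2 * (x + y)) ^ 2) by nra.
  split; [|split]; field; repeat split; apply Rgt_not_eq; lra.
Qed.

Lemma P_step_F (t : triple) :
  FA (P_step t) = FA t ^ 3 /\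
  FB (P_step t) = (3 * FB t - FB t ^ 3) / 2 /\
  FC (P_step t) = FC t * (3 * FA t ^ 2 - FC t ^ 2) / 2.
Proof.
  destruct t as [[x y] z]. simpl. split; [|split]; field.
Qed.

Definition Inv (t : triple) : Prop :=
  0 <= FA t <= 1 /\ 0 <= FC t /\ FC t <= FA t /\ FC t <= FB t /\ FB t <= 1.

Definition Rel (t1 t2 : triple) : Prop :=
  FA t1 = FA t2 /\ FB t1 <= FB t2 /\ FC t1 <= FC t2.

Lemma div_le (x y D : R) : 0 < D -> x <= y -> x / D <= y / D.
Proof. intros. unfold Rdiv. apply Rmult_le_compat_r; [left; apply Rinv_0_lt_compat|]; lra. Qed.
Lemma div_ge0 (x D : R) : 0 < D -> 0 <= x -> 0 <= x / D.
Proof. intros. unfold Rdiv. apply Rmult_le_pos; [|left; apply Rinv_0_lt_compat]; lra. Qed.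
Lemma div_le1 (x D : R) : 0 < D -> x <= D -> x / D <= 1.
Proof. intros. replace 1 with (D / D) by (field; lra). apply div_le; lra. Qed.

Lemma Inv_B_gen (A B C : R) :
  0 <= A <= 1 -> 0 <= B <= 1 -> 0 <= C -> B * C <= A -> B ^ 2 + C ^ 2 <= 1 + A ^ 2 ->
  let D := 1 + A ^ 2 in
  0 <= 2 * A / D <= 1 /\ 0 <= 2 * B * C / D /\ 2 * B * C / D <= 2 * A / D /\
  2 * B * C / D <= (B ^ 2 + C ^ 2) / D /\ (B ^ 2 + C ^ 2) / D <= 1.
Proof.
  intros HA HB HC HBC HS D.
  assert (0 < D) by (unfold D; nra).
  repeat split.
  - apply div_ge0; lra.
  - apply div_le1; unfold D; nra.
  - apply div_ge0; nra.
  - apply div_le; nra.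
  - apply div_le; pose proof (pow2_ge_0 (B - C)); nra.
  - apply div_le1; unfold D in *; nra.
Qed.

Lemma Inv_step (s : step) (t : triple) : Inv t -> Inv (apply_step s t).
Proof.
  unfold Inv. intros (HA & HC & HCA & HCB & HB).
  destruct s; simpl.
  - destruct (B_step_F t) as (E1 & E2 & E3). rewrite E1, E2, E3.
    apply Inv_B_gen; try nra.
  - destruct (P_step_F t) as (E1 & E2 & E3). rewrite E1, E2, E3.
    set (A := FA t) in *. set (B := FB t) in *. set (C := FC t) in *.
    assert (C ^ 2 <= A ^ 2) by nra.
    assert (A ^ 2 <= 1) by nra.
    assert (0 <= (A - C) ^ 2 * (2 * A + C)) by (apply Rmult_le_pos; nra).
    assert (0 <= (B - C) * (3 - (B ^ 2 + B * C + C ^ 2))) by (apply Rmult_le_pos; nra).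
    assert (0 <= (1 - B) ^ 2 * (2 + B)) by (apply Rmult_le_pos; nra).
    repeat split; try nra.
Qed.

Lemma Rel_step (s : step) (t1 t2 : triple) :
  Inv t1 -> Inv t2 -> Rel t1 t2 -> Rel (apply_step s t1) (apply_step s t2).
Proof.
  unfold Inv, Rel. intros (HA1 & HC1 & HCA1 & HCB1 & HB1) (HA2 & HC2 & HCA2 & HCB2 & HB2)
    (EA & LB & LC).
  destruct s; simpl.
  - destruct (B_step_F t1) as (E1 & E2 & E3). rewrite E1, E2, E3.
    destruct (B_step_F t2) as (F1 & F2 & F3). rewrite F1, F2, F3.
    rewrite EA. assert (0 < 1 + FA t2 ^ 2) by nra.
    repeat split; apply div_le; nra.
  - destruct (P_step_F t1) as (E1 & E2 & E3). rewrite E1, E2, E3.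
    destruct (P_step_F t2) as (F1 & F2 & F3). rewrite F1, F2, F3.
    rewrite EA in *.
    set (A := FA t2) in *. set (B1 := FB t1) in *. set (C1 := FC t1) in *.
    set (B2 := FB t2) in *. set (C2 := FC t2) in *.
    assert (0 <= (B2 - B1) * (3 - (B1 ^ 2 + B1 * B2 + B2 ^ 2))) by (apply Rmult_le_pos; nra).
    assert (0 <= (C2 - C1) * (3 * A ^ 2 - (C1 ^ 2 + C1 * C2 + C2 ^ 2))) by (apply Rmult_le_pos; nra).
    repeat split; nra.
Qed.

Lemma steps_pres (rest : list step) : forall t1 t2,
  Inv t1 -> Inv t2 -> Rel t1 t2 ->
  Inv (apply_steps rest t1) /\ Inv (apply_steps rest t2) /\
  Rel (apply_steps rest t1) (apply_steps rest t2).
Proof.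
  unfold apply_steps. induction rest as [|s rest IH]; intros t1 t2 H1 H2 HR; simpl.
  - auto.
  - apply IH; [apply Inv_step; auto | apply Inv_step; auto | apply Rel_step; auto].
Qed.

Lemma rate_eq (ss : list step) (eb xi a : R) :
  rate ss eb xi a =
  1 - H2 ((1 - FA (apply_steps ss (init_triple eb xi a))) / 2)
    - H2 ((1 - FB (apply_steps ss (init_triple eb xi a))) / 2).
Proof.
  unfold rate. destruct (apply_steps ss (init_triple eb xi a)) as [[x y] z]. simpl.
  replace ((1 - (1 - 2 * (x + y))) / 2) with (x + y) by field.
  replace ((1 - (1 - 2 * (y + z))) / 2) with (z + y) by field.
  reflexivity.
Qed.

Theorem corollary2 (eb : R) (rest : list step) :
  0 < eb ->
  1 <= xi_of eb ->
  eb < 1 / (2 * (1 + xi_of eb)) ->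
  eb < 1 / (2 * xi_of eb) ->
  forall a : R, 0 <= a <= eb ->
    rate (Bs :: rest) eb (xi_of eb) 0 <= rate (Bs :: rest) eb (xi_of eb) a.
Proof.
  intros Heb HX Hy1 Hy2 a Ha.
  set (X := xi_of eb) in *. clearbody X.
  assert (K1 : 2 * eb * (1 + X) < 1).
  { apply Rmult_lt_compat_r with (r := 2 * (1 + X)) in Hy1; [|lra].
    replace (1 / (2 * (1 + X)) * (2 * (1 + X))) with 1 in Hy1 by (field; lra). lra. }
  assert (K2 : 2 * X * eb < 1).
  { apply Rmult_lt_compat_r with (r := 2 * X) in Hy2; [|lra].
    replace (1 / (2 * X) * (2 * X)) with 1 in Hy2 by (field; lra). lra. }
  rewrite !rate_eq.
  assert (Hs : forall b, apply_steps (Bs :: rest) (init_triple eb X b)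
                 = apply_steps rest (B_step (init_triple eb X b))) by reflexivity.
  rewrite !Hs.
  assert (Hinit : forall b, 0 <= b <= eb -> Inv (B_step (init_triple eb X b))).
  { intros b Hb. unfold Inv. destruct (B_step_F (init_triple eb X b)) as (E1 & E2 & E3).
    rewrite E1, E2, E3. simpl.
    replace (eb - b + b) with eb by ring.
    replace (b + (X * eb - b)) with (X * eb) by ring.
    replace (eb - b + (X * eb - b)) with (eb + X * eb - 2 * b) by ring.
    assert (Hv : 0 <= (X * eb - eb) * (1 - X * eb)) by (apply Rmult_le_pos; nra).
    assert (HB0 : 0 <= 1 - 2 * (X * eb)) by lra.
    assert (HC0 : 0 <= 1 - 2 * (eb + X * eb - 2 * b)) by lra.
    assert (HCm : 1 - 2 * (eb + X * eb - 2 * b) <= 1 + 2 * eb - 2 * X * eb) by lra.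
    assert (Hp1 : 0 <= (1 - 2 * (X * eb)) * (1 + 2 * eb - 2 * X * eb - (1 - 2 * (eb + X * eb - 2 * b))))
      by (apply Rmult_le_pos; lra).
    assert (Hp2 : 0 <= (1 + 2 * eb - 2 * X * eb - (1 - 2 * (eb + X * eb - 2 * b))) *
                       (1 + 2 * eb - 2 * X * eb + (1 - 2 * (eb + X * eb - 2 * b))))
      by (apply Rmult_le_pos; lra).
    apply Inv_B_gen; nra. }
  assert (Hrel : Rel (B_step (init_triple eb X 0)) (B_step (init_triple eb X a))).
  { unfold Rel. destruct (B_step_F (init_triple eb X 0)) as (E1 & E2 & E3).
    destruct (B_step_F (init_triple eb X a)) as (F1 & F2 & F3).
    rewrite E1, E2, E3, F1, F2, F3. simpl.
    assert (0 < 1 + (1 - 2 * (eb - 0 + 0)) ^ 2) by nra.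
    replace (eb - a + a) with (eb - 0 + 0) by ring.
    replace (a + (X * eb - a)) with (0 + (X * eb - 0)) by ring.
    repeat split; try reflexivity; apply div_le; nra. }
  destruct (steps_pres rest _ _ (Hinit 0 ltac:(lra)) (Hinit a Ha) Hrel)
    as ((I1 & I2 & I3 & I4 & I5) & (J1 & J2 & J3 & J4 & J5) & (EA & LB & LC)).
  rewrite EA.
  assert (H2m : H2 ((1 - FB (apply_steps rest (B_step (init_triple eb X a)))) / 2)
             <= H2 ((1 - FB (apply_steps rest (B_step (init_triple eb X 0)))) / 2)).
  { apply H2_mono; lra. }
  lra.
Qed.
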